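(* Let $n\ge2$, $F_1,\dots,F_n:\mathbb{R}^d\to\mathbb{R}^d$ with each $F_i$ $L_i$-Lipschitz, $F=\frac1n\sum_iF_i$ $L$-Lipschitz, and $z_*$ with $F(z_* )=0$. Let $L_{max}=\max_iL_i$, $A=\frac2n\sum_iL_i^2$, $\sigma_*^2=\frac1n\sum_i\|F_i(z_* )\|^2$. Suppose the SEG-RR step sizes satisfy $\gamma_1\le\frac{1}{3\sqrt{2n(n-1)}L_{max}}$ and $\gamma_2\le\frac{1}{\sqrt{n(n-1)}L_{max}}$. Then for every epoch $k$ the SEG-RR iterates satisfy $$\mathbb{E}_k\Big[\frac1n\sum_{j=0}^{n-1}\|z_j^k-z_0^k\|^2\Big]\le\big[10n^2L^2+A(25+n)\big]\gamma_1^2\|z_0^k-z_*\|^2+2(n+25)\gamma_1^2\sigma_*^2.$$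
   Context: SEG-RR with step sizes $\gamma_1,\gamma_2>0$: for each epoch $k$, with current point $z_0^k$, draw a permutation $\pi^k$ of $\{1,\dots,n\}$ uniformly at random, independently of the past; for $i=0,\dots,n-1$ set $\bar z_i^k=z_i^k-\gamma_2F_{\pi_i^k}(z_i^k)$, $z_{i+1}^k=z_i^k-\gamma_1F_{\pi_i^k}(\bar z_i^k)$; then $z_0^{k+1}=z_n^k$. $\mathbb{E}_k$ denotes expectation over $\pi^k$ conditional on the history up to $z_0^k$. *)

(* Defs.v *)
From mathcomp Require Import all_boot all_order all_algebra all_fingroup.
Set Implicit Arguments. Unset Strict Implicit. Unset Printing Implicit Defensive.
Import Order.TTheory GRing.Theory Num.Theory.
Local Open Scope ring_scope.

Definition enorm (R : rcfType) (d : nat) (v : 'rV[R]_d) : R :=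
  Num.sqrt (\sum_(k < d) v 0 k ^+ 2).

Definition lipschitz (R : rcfType) (d : nat) (G : 'rV[R]_d -> 'rV[R]_d) (L : R) :=
  forall x y, enorm (G x - G y) <= L * enorm (x - y).

Definition op_at (R : rcfType) (d n : nat) (F : 'I_n -> 'rV[R]_d -> 'rV[R]_d)
  (s : 'S_n) (j : nat) (z : 'rV[R]_d) : 'rV[R]_d :=
  oapp (fun i : 'I_n => F (s i) z) 0 (insub j).

Fixpoint seg_rr (R : rcfType) (d n : nat) (F : 'I_n -> 'rV[R]_d -> 'rV[R]_d)
  (g1 g2 : R) (s : 'S_n) (z0 : 'rV[R]_d) (j : nat) : 'rV[R]_d :=
  match j with
  | 0 => z0
  | j'.+1 =>
      let z := seg_rr F g1 g2 s z0 j' in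
      let zbar := z - g2 *: op_at F s j' z in
      z - g1 *: op_at F s j' zbar
  end.

Definition E_perm (R : rcfType) (n : nat) (X : 'S_n -> R) : R :=
  (n`!%:R)^-1 * \sum_(s : 'S_n) X s.

(* Main.v *)
Require Import Defs.
From mathcomp Require Import all_boot all_order all_algebra all_fingroup.
From mathcomp Require Import ring lra.
Import Order.TTheory GRing.Theory Num.Theory.
Set Implicit Arguments. Unset Strict Implicit. Unset Printing Implicit Defensive.
Local Open Scope ring_scope.

Section Vec.
Variables (R : rcfType) (d : nat).
Implicit Types u v w : 'rV[R]_d.

Definition nsq v : R := \sum_(k < d) v 0 k ^+ 2.
Definition dotv u v : R := \sum_(k < d) u 0 k * v 0 k.

Lemma nsq_ge0 v : 0 <= nsq v.
Proof. by apply: sumr_ge0 => k _; rewrite sqr_ge0. Qed.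

Lemma enorm_sq v : enorm v ^+ 2 = nsq v.
Proof. by rewrite /enorm sqr_sqrtr // nsq_ge0. Qed.

Lemma nsqN v : nsq (- v) = nsq v.
Proof. by apply: eq_bigr => k _; rewrite mxE sqrrN. Qed.

Lemma nsqZ a v : nsq (a *: v) = a ^+ 2 * nsq v.
Proof. rewrite /nsq mulr_sumr; apply: eq_bigr => k _; rewrite mxE; ring. Qed.

Lemma nsqB_sym u v : nsq (u - v) = nsq (v - u).
Proof. by rewrite -nsqN opprB. Qed.

Lemma nsq_add2 u v : nsq (u + v) <= 2 * nsq u + 2 * nsq v.
Proof.
rewrite /nsq !mulr_sumr -big_split /=; apply: ler_sum => k _; rewrite mxE.
have := sqr_ge0 (u 0 k - v 0 k). nra.
Qed.

Lemma dotv_le u v : 2 * dotv u v <= nsq u + nsq v.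
Proof.
rewrite /dotv /nsq mulr_sumr -big_split /=; apply: ler_sum => k _.
have := sqr_ge0 (u 0 k - v 0 k). nra.
Qed.

Lemma dotvC u v : dotv u v = dotv v u.
Proof. by apply: eq_bigr => k _; rewrite mulrC. Qed.

Lemma nsq_dot v : nsq v = dotv v v.
Proof. by apply: eq_bigr => k _; rewrite expr2. Qed.

Lemma nsq_sum (I : finType) (P : pred I) (u : I -> 'rV[R]_d) :
  nsq (\sum_(i | P i) u i) = \sum_(i | P i) \sum_(i' | P i') dotv (u i) (u i').
Proof.
rewrite /nsq /dotv.
under eq_bigr => k _ do rewrite summxE expr2 mulr_suml; rewrite exchange_big /=.
apply: eq_bigr => i _; rewrite exchange_big /=; apply: eq_bigr => k _.
by rewrite mulr_sumr.
Qed.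

Lemma nsq_sum_le (m : nat) (u : 'I_m -> 'rV[R]_d) :
  nsq (\sum_(i < m) u i) <= m%:R * \sum_(i < m) nsq (u i).
Proof.
rewrite nsq_sum.
have -> : m%:R * \sum_(i < m) nsq (u i) =
   \sum_(i < m) \sum_(i' < m) (nsq (u i) / 2 + nsq (u i') / 2).
  rewrite [RHS](eq_bigr (fun i => m%:R * (nsq (u i) / 2) + (\sum_(i' < m) nsq (u i')) / 2)); last first.
    by move=> i _; rewrite big_split /= sumr_const card_ord -mulr_suml mulr_natl.
  rewrite big_split /= sumr_const card_ord -mulr_sumr -mulr_suml -mulr_natl.
  by field.
apply: ler_sum => i _; apply: ler_sum => i' _.
have := dotv_le (u i) (u i'); lra.
Qed.

End Vec.

Section Perm.
Variables (R : rcfType) (n : nat).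

Lemma sum_perm_mull (p : 'S_n) (X : 'S_n -> R) :
  \sum_(s : 'S_n) X s = \sum_(s : 'S_n) X (p * s)%g.
Proof. by rewrite (reindex_inj (mulgI p)). Qed.

Lemma fact_neq0 : (n`!%:R : R) != 0.
Proof. by rewrite pnatr_eq0 -lt0n fact_gt0. Qed.

Lemma sum_perm_single (f : 'I_n -> R) (t : 'I_n) :
  (\sum_(s : 'S_n) f (s t)) * n%:R = n`!%:R * \sum_i f i.
Proof.
have H u : \sum_(s : 'S_n) f (s u) = \sum_(s : 'S_n) f (s t).
  rewrite (sum_perm_mull (tperm u t)); apply: eq_bigr => s _.
  by rewrite permM tpermL.
have -> : (\sum_(s : 'S_n) f (s t)) * n%:R = \sum_(u < n) \sum_(s : 'S_n) f (s u).
  by rewrite (eq_bigr _ (fun u _ => H u)) sumr_const card_ord mulr_natr.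
rewrite exchange_big /=.
rewrite (eq_bigr (fun _ => \sum_i f i)); last first.
  by move=> s _; rewrite [RHS](reindex_inj (@perm_inj _ s)).
by rewrite sumr_const card_Sn mulr_natl.
Qed.

Lemma sum_perm_pair (g : 'I_n -> 'I_n -> R) (t t' : 'I_n) : t != t' ->
  (\sum_(s : 'S_n) g (s t) (s t')) * (n%:R * (n%:R - 1)) =
  n`!%:R * \sum_i \sum_(i' | i' != i) g i i'.
Proof.
move=> ntt.
have H u u' : u != u' -> \sum_(s : 'S_n) g (s u) (s u') = \sum_(s : 'S_n) g (s t) (s t').
  move=> nuu; set q := tperm u t; set r := tperm (q u') t'.
  rewrite (sum_perm_mull (q * r)%g); apply: eq_bigr => s _.
  have qu : q u = t by rewrite /q tpermL.
  have qu' : q u' != t by rewrite -qu (inj_eq perm_inj) eq_sym.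
  by rewrite !permM /r qu tpermL tpermD // eq_sym.
have -> : (\sum_(s : 'S_n) g (s t) (s t')) * (n%:R * (n%:R - 1)) =
    \sum_(u < n) \sum_(u' | u' != u) \sum_(s : 'S_n) g (s u) (s u').
  have n1 : (0 < n)%N := leq_ltn_trans (leq0n _) (ltn_ord t).
  rewrite [RHS](eq_bigr (fun _ : 'I_n => (n%:R - 1) * \sum_(s : 'S_n) g (s t) (s t'))); last first.
    move=> u _; rewrite (eq_bigr (fun _ : 'I_n => \sum_(s : 'S_n) g (s t) (s t'))); last first.
      by move=> u' h; apply: H; rewrite eq_sym.
    rewrite sumr_const.
    have -> : #|[pred u' : 'I_n | u' != u]| = n.-1 by rewrite cardC1 card_ord.
    by rewrite mulrBl mul1r mulr_natl -subn1 mulrnBr // mulr1n.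
  by rewrite sumr_const card_ord -mulr_natl; ring.
under eq_bigr => u _ do rewrite exchange_big.
rewrite exchange_big /=.
rewrite [RHS](_ : _ = \sum_(s : 'S_n) \sum_i \sum_(i' | i' != i) g i i'); last first.
  by rewrite sumr_const card_Sn mulr_natl.
apply: eq_bigr => s _.
rewrite [RHS](reindex_inj (@perm_inj _ s)); apply: eq_bigr => u _.
rewrite [RHS](reindex_inj (@perm_inj _ s)); apply: eq_bigl => u'.
by rewrite (inj_eq perm_inj).
Qed.

End Perm.

Section Exp.
Variables (R : rcfType) (n : nat).
Implicit Types X Y : 'S_n -> R.

Lemma E_perm_le X Y : (forall s, X s <= Y s) -> E_perm X <= E_perm Y.
Proof.
move=> h; rewrite /E_perm ler_wpM2l ?invr_ge0 ?ler0n //.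
by apply: ler_sum => s _.
Qed.

Lemma E_perm_ext X Y : (forall s, X s = Y s) -> E_perm X = E_perm Y.
Proof. by move=> h; rewrite /E_perm; congr (_ * _); apply: eq_bigr => s _. Qed.

Lemma E_perm_add X Y : E_perm (fun s => X s + Y s) = E_perm X + E_perm Y.
Proof. by rewrite /E_perm big_split mulrDr. Qed.

Lemma E_perm_const (c : R) : E_perm (fun _ : 'S_n => c) = c.
Proof.
rewrite /E_perm sumr_const card_Sn -[c *+ _]mulr_natl mulrA mulVf ?mul1r //.
exact: fact_neq0.
Qed.

Lemma E_perm_scale (c : R) X : E_perm (fun s => c * X s) = c * E_perm X.
Proof. by rewrite /E_perm -mulr_sumr mulrCA. Qed.

Lemma E_perm_sum (I : finType) (P : pred I) (X : I -> 'S_n -> R) :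
  E_perm (fun s => \sum_(i | P i) X i s) = \sum_(i | P i) E_perm (X i).
Proof. by rewrite /E_perm exchange_big /= mulr_sumr. Qed.

Lemma E_perm_single (f : 'I_n -> R) (t : 'I_n) :
  E_perm (fun s => f (s t)) = (\sum_i f i) / n%:R.
Proof.
have n0 : (n%:R : R) != 0 by rewrite pnatr_eq0 -lt0n (leq_ltn_trans (leq0n _) (ltn_ord t)).
rewrite /E_perm -[\sum_(s : 'S_n) f (s t)](mulfK n0) sum_perm_single.
by rewrite mulrA mulKf // fact_neq0.
Qed.

Lemma E_perm_pair (g : 'I_n -> 'I_n -> R) (t t' : 'I_n) : t != t' ->
  E_perm (fun s => g (s t) (s t')) =
  (\sum_i \sum_(i' | i' != i) g i i') / (n%:R * (n%:R - 1)).
Proof.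
move=> ntt.
have n2 : (1 < n)%N.
  case: n t t' ntt => [[]//|[|m]] t t' //.
  by rewrite (ord1 t) (ord1 t').
have n0 : (n%:R * (n%:R - 1) : R) != 0.
  rewrite mulf_eq0 negb_or pnatr_eq0 -lt0n (ltnW n2) /= subr_eq0.
  by rewrite pnatr_eq1 gtn_eqF.
rewrite /E_perm -[\sum_(s : 'S_n) g (s t) (s t')](mulfK n0) sum_perm_pair //.
by rewrite mulrA mulKf // fact_neq0.
Qed.

End Exp.

Section Alg.
Variables (R : rcfType) (d n : nat) (F : 'I_n -> 'rV[R]_d -> 'rV[R]_d).

Lemma op_atE (s : 'S_n) t (ht : (t < n)%N) x : op_at F s t x = F (s (Ordinal ht)) x.
Proof. by rewrite /op_at insubT. Qed.

Lemma seg_diff g1 g2 s z0 j :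
  seg_rr F g1 g2 s z0 j - z0 = - g1 *: \sum_(t < j)
    op_at F s t (seg_rr F g1 g2 s z0 t - g2 *: op_at F s t (seg_rr F g1 g2 s z0 t)).
Proof.
elim: j => [|j IH]; first by rewrite big_ord0 scaler0 subrr.
by rewrite big_ord_recr /= scalerDr -IH scaleNr addrAC.
Qed.

Lemma lip_sq (G : 'rV[R]_d -> 'rV[R]_d) L : 0 <= L -> lipschitz G L ->
  forall x y, nsq (G x - G y) <= L ^+ 2 * nsq (x - y).
Proof.
move=> L0 hG x y; rewrite -!enorm_sq.
have h := hG x y; have e0 : 0 <= enorm (G x - G y) by rewrite sqrtr_ge0.
have e1 : 0 <= enorm (x - y) by rewrite sqrtr_ge0.
nra.
Qed.

Lemma step_bound (Fi : 'rV[R]_d -> 'rV[R]_d) (M g2 : R) (zt z0 : 'rV[R]_d) :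
  0 <= M -> (forall x y, nsq (Fi x - Fi y) <= M * nsq (x - y)) ->
  g2 ^+ 2 * M <= 1 / 2 ->
  nsq (Fi (zt - g2 *: Fi zt) - Fi z0) <=
    4 * M * nsq (zt - z0) + 4 * (g2 ^+ 2 * M) * nsq (Fi z0).
Proof.
move=> M0 hF hg.
have h1 := hF (zt - g2 *: Fi zt) z0.
have h2 : nsq (zt - g2 *: Fi zt - z0) <= 2 * nsq (zt - z0) + 2 * (g2 ^+ 2 * nsq (Fi zt)).
  rewrite addrAC -nsqZ -(nsqN (g2 *: Fi zt)); exact: nsq_add2.
have h3 : nsq (Fi zt) <= 2 * nsq (Fi zt - Fi z0) + 2 * nsq (Fi z0).
  by rewrite -{1}(subrK (Fi z0) (Fi zt)); exact: nsq_add2.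
have h4 := hF zt z0.
have p1 := nsq_ge0 (zt - z0); have p2 := nsq_ge0 (Fi z0).
have p3 := nsq_ge0 (Fi zt - Fi z0); have p4 : 0 <= g2 ^+ 2 := sqr_ge0 g2.
set W := nsq (zt - z0) in h2 h4 p1 *.
set B := nsq (Fi z0) in h3 p2 *.
set Y := nsq (Fi zt) in h2 h3.
set Z := nsq (zt - g2 *: Fi zt - z0) in h1 h2.
set E := nsq (Fi zt - Fi z0) in h3 h4 p3.
set g := g2 ^+ 2 in p4 hg h2 *.
have h5 : Y <= 2 * M * W + 2 * B by nra.
have h6 : Z <= 2 * W + 2 * g * (2 * M * W + 2 * B) by nra.
have h7 : M * Z <= M * (2 * W + 2 * g * (2 * M * W + 2 * B)) by nra.
have h8 : 0 <= M * W by nra.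
have h9 : g * M * (M * W) <= 1/2 * (M * W) by nra.
nra.
Qed.

End Alg.

Section WB.
Variables (R : rcfType) (d n : nat).

Lemma sum_le_widen (j : nat) (f : nat -> R) : (j <= n)%N -> (forall t, 0 <= f t) ->
  \sum_(t < j) f t <= \sum_(t < n) f t.
Proof.
move=> jn f0; rewrite (big_ord_widen _ _ jn) [X in _ <= X](bigID (fun t : 'I_n => (t < j)%N)) /=.
by rewrite lerDl sumr_ge0.
Qed.

Lemma W_bound (g M c : R) (a b : nat -> 'rV[R]_d) (Sv : R) :
  0 <= M -> 0 <= c -> (1 <= n)%N ->
  (forall t, (t < n)%N -> nsq (a t - b t) <=
      4 * M * nsq (g *: \sum_(u < t) a u) + 4 * c * nsq (b t)) ->
  \sum_(t < n) nsq (b t) = Sv ->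
  \sum_(j < n) nsq (g *: \sum_(t < j) a t) <=
  8 * (g ^+ 2 * M) * (n%:R * (n%:R - 1)) * \sum_(j < n) nsq (g *: \sum_(t < j) a t)
  + 8 * g ^+ 2 * c * (n%:R * (n%:R - 1)) * Sv
  + 2 * g ^+ 2 * \sum_(j < n) nsq (\sum_(t < j) b t).
Proof.
move=> M0 c0 n1 hab hS.
set W := \sum_(j < n) _.
set T := \sum_(j < n) nsq _.
set Q := \sum_(t < n) nsq (a t - b t).
have g0 : 0 <= g ^+ 2 := sqr_ge0 g.
have hj (j : 'I_n) : nsq (g *: \sum_(t < j) a t) <=
    2 * g ^+ 2 * (n%:R - 1) * Q + 2 * g ^+ 2 * nsq (\sum_(t < j) b t).
  have -> : \sum_(t < j) a t = \sum_(t < j) (a t - b t) + \sum_(t < j) b t.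
    by rewrite -big_split; apply: eq_bigr => t _; exact: (esym (subrK _ _)).
  rewrite nsqZ.
  have h1 := nsq_add2 (\sum_(t < j) (a t - b t)) (\sum_(t < j) b t).
  have h2 := nsq_sum_le (fun t : 'I_j => a t - b t).
  have h3 : \sum_(t < j) nsq (a t - b t) <= Q.
    have := @sum_le_widen j (fun t => nsq (a t - b t)) (ltnW (ltn_ord j)) (fun t => nsq_ge0 _). done.
  have h4 : (j%:R : R) <= n%:R - 1.
    have h : ((j.+1)%:R : R) <= n%:R by rewrite ler_nat ltn_ord.
    rewrite -natr1 in h; lra.
  have p1 : 0 <= \sum_(t < j) nsq (a t - b t) by apply: sumr_ge0 => t _; exact: nsq_ge0.
  have p2 : (0 : R) <= j%:R by rewrite ler0n.
  set X := nsq (\sum_(t < j) (a t - b t)) in h1 h2 *.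
  set Y := nsq (\sum_(t < j) b t) in h1 *.
  set Z := nsq (_ + _) in h1 *.
  set P := \sum_(t < j) nsq (a t - b t) in h2 h3 p1.
  have h5 : X <= (n%:R - 1) * Q by nra.
  have h6 : Z <= 2 * ((n%:R - 1) * Q) + 2 * Y by lra.
  nra.
have hW : W <= n%:R * (2 * g ^+ 2 * (n%:R - 1) * Q) + 2 * g ^+ 2 * T.
  have -> : n%:R * (2 * g ^+ 2 * (n%:R - 1) * Q) = \sum_(j < n) (2 * g ^+ 2 * (n%:R - 1) * Q).
    by rewrite sumr_const card_ord mulr_natl.
  rewrite /W /T [2 * g ^+ 2 * \sum_(j < n) _]mulr_sumr -big_split /=.
  by apply: ler_sum => j _; exact: hj j.
have hQ : Q <= 4 * M * W + 4 * c * Sv.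
  rewrite /Q /W -hS [4 * M * _]mulr_sumr [4 * c * _]mulr_sumr -big_split /=.
  by apply: ler_sum => t _; exact: hab.
have n0 : (1 : R) <= n%:R by rewrite ler1n.
have k0 : 0 <= n%:R * (2 * g ^+ 2 * (n%:R - 1)) by nra.
have := ler_wpM2l k0 hQ.
nra.
Qed.

End WB.

Section ET.
Variables (R : rcfType) (d n : nat) (F : 'I_n -> 'rV[R]_d -> 'rV[R]_d) (z0 : 'rV[R]_d).

Lemma sum_ite (j : nat) (t : 'I_j) (x y : R) :
  \sum_(t' < j) (if t == t' then x else y) = j%:R * y + (x - y).
Proof.
rewrite (eq_bigr (fun t' => y + (if t == t' then x - y else 0))); last first.
  by move=> t' _; case: (t == t'); rewrite ?addr0 // addrC subrK.
rewrite big_split /= sumr_const card_ord mulr_natl; congr (_ + _).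
rewrite (bigD1 t) //= eqxx big1 ?addr0 // => t' ht'.
by rewrite eq_sym (negbTE ht').
Qed.

Lemma E_dot (j : nat) (hj : (j <= n)%N) (t t' : 'I_j) :
  E_perm (fun s : 'S_n => dotv (op_at F s t z0) (op_at F s t' z0)) =
  if t == t' then (\sum_i nsq (F i z0)) / n%:R
  else (nsq (\sum_i F i z0) - \sum_i nsq (F i z0)) / (n%:R * (n%:R - 1)).
Proof.
have ht : (t < n)%N := leq_trans (ltn_ord t) hj.
have ht' : (t' < n)%N := leq_trans (ltn_ord t') hj.
under E_perm_ext => s do rewrite (op_atE _ _ ht) (op_atE _ _ ht').
case: eqP => [e|ne].
  have -> : Ordinal ht' = Ordinal ht by apply: val_inj => /=; rewrite e.
  rewrite (E_perm_single (fun i => dotv (F i z0) (F i z0))).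
  by congr (_ / _); apply: eq_bigr => i _; rewrite /nsq /dotv; apply: eq_bigr => k _; rewrite expr2.
have nt : Ordinal ht != Ordinal ht'.
  apply/eqP => h; apply: ne; apply: val_inj; exact: (congr1 val h).
rewrite (E_perm_pair (fun i i' => dotv (F i z0) (F i' z0)) nt); congr (_ / _).
rewrite nsq_sum -sumrB; apply: eq_bigr => i _.
by rewrite [in RHS](bigD1 i) //= nsq_dot [_ + _ - _]addrC addKr.
Qed.

Lemma E_j (j : nat) : (j <= n)%N -> (1 < n)%N ->
  E_perm (fun s : 'S_n => nsq (\sum_(t < j) op_at F s t z0)) * (n%:R * (n%:R - 1)) <=
  nsq (\sum_i F i z0) * (n%:R * (n%:R - 1)) + n%:R ^+ 2 * (\sum_i nsq (F i z0)) / 4.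
Proof.
move=> hj n2.
set Sv := \sum_i nsq (F i z0); set Ss := nsq (\sum_i F i z0).
set N : R := n%:R.
have N2 : 2 <= N by rewrite /N (ler_nat R 2 n).
set x := Sv / N; set y := (Ss - Sv) / (N * (N - 1)).
under E_perm_ext => s do rewrite nsq_sum.
rewrite E_perm_sum.
under eq_bigr => t _ do rewrite E_perm_sum (eq_bigr _ (fun t' _ => E_dot hj t t')) -/Sv -/Ss -/N -/x -/y sum_ite.
rewrite sumr_const card_ord -[(_ + _) *+ j]mulr_natl.
have hx : x * N = Sv by rewrite /x mulfVK // lt0r_neq0 //; lra.
have hy : y * (N * (N - 1)) = Ss - Sv.
  by rewrite /y mulfVK // mulf_neq0 // lt0r_neq0 //; lra.
set J : R := j%:R.
have e : J * (J * y + (x - y)) * (N * (N - 1)) =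
   J * (J - 1) * (y * (N * (N - 1))) + J * (N - 1) * (x * N) by ring.
rewrite e hx hy.
have J0 : 0 <= J by rewrite /J ler0n.
have JN : J <= N by rewrite /J /N ler_nat.
have Sv0 : 0 <= Sv by apply: sumr_ge0 => i _; exact: nsq_ge0.
have Ss0 : 0 <= Ss by exact: nsq_ge0.
have h1 : 0 <= (N * (N - 1) - J * (J - 1)) * Ss.
  apply: mulr_ge0 => //; nra.
have h2 : 0 <= (N - 2 * J) ^+ 2 * Sv by apply: mulr_ge0 => //; exact: sqr_ge0.
nra.
Qed.

End ET.

Lemma final_arith (R : rcfType) (N G EW ET Sv Ss A r s2 L2 : R) :
  2 <= N -> 0 <= G -> 0 <= Sv -> 0 <= Ss -> 0 <= A -> 0 <= r -> 0 <= s2 -> 0 <= L2 ->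
  EW <= 9 / 5 * (8 * G * Sv + 2 * G * ET) ->
  ET * (N * (N - 1)) <= N * (Ss * (N * (N - 1)) + N ^+ 2 * Sv / 4) ->
  Sv <= N * (A * r + 2 * s2) -> Ss <= N ^+ 2 * (L2 * r) ->
  N^-1 * EW <= (10 * N ^+ 2 * L2 + A * (25 + N)) * G * r + 2 * (N + 25) * G * s2.
Proof.
move=> N2 G0 Sv0 Ss0 A0 r0 s0 L0 hEW hET hSv hSs.
have K0 : 0 < N * (N - 1) by nra.
have hET2 : ET <= N * Ss + (N + 2) * Sv / 4.
  rewrite -(ler_pM2r K0); apply: (le_trans hET).
  have : 0 <= Sv * (N ^+ 2 - 2 * N) by apply: mulr_ge0 => //; nra.
  nra.
set V := A * r + 2 * s2 in hSv.
have V0 : 0 <= V by rewrite /V; have := mulr_ge0 A0 r0; lra.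
set Lr := L2 * r in hSs.
have Lr0 : 0 <= Lr by exact: mulr_ge0.
have h1 : EW <= 9 / 5 * G * (8 * Sv + 2 * N * Ss + (N + 2) * Sv / 2).
  have : 0 <= G * (N * Ss + (N + 2) * Sv / 4 - ET) by apply: mulr_ge0 => //; lra.
  nra.
have h2 : 8 * Sv + 2 * N * Ss + (N + 2) * Sv / 2 <= N * (8 * V + 2 * N ^+ 2 * Lr + (N + 2) * V / 2).
  have a1 : (N + 2) * Sv <= (N + 2) * (N * V) by apply: ler_wpM2l => //; lra.
  have a2 : N * Ss <= N * (N ^+ 2 * Lr) by apply: ler_wpM2l => //; lra.
  nra.
have h3 : 9 / 5 * (8 * V + 2 * N ^+ 2 * Lr + (N + 2) * V / 2) <=
          (10 * N ^+ 2 * L2 + A * (25 + N)) * r + 2 * (N + 25) * s2.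
  have e : (10 * N ^+ 2 * L2 + A * (25 + N)) * r + 2 * (N + 25) * s2 =
           10 * N ^+ 2 * Lr + (25 + N) * V by rewrite /Lr /V; ring.
  rewrite e.
  have : 0 <= N ^+ 2 * Lr by apply: mulr_ge0 => //; exact: sqr_ge0.
  have : 0 <= N * V by apply: mulr_ge0 => //; lra.
  nra.
have N0 : 0 < N by lra.
rewrite ler_pdivrMl //.
have e2 : N * ((10 * N ^+ 2 * L2 + A * (25 + N)) * G * r + 2 * (N + 25) * G * s2) =
   N * G * ((10 * N ^+ 2 * L2 + A * (25 + N)) * r + 2 * (N + 25) * s2) by ring.
rewrite e2; apply: (le_trans h1).
have NG : 0 <= N * G by apply: mulr_ge0 => //; lra.
have := ler_wpM2l NG h3.
have G5 : 0 <= 9 / 5 * G by lra.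
have := ler_wpM2l G5 h2.
nra.
Qed.

Theorem lemma2 (R : rcfType) (d n : nat) (F : 'I_n -> 'rV[R]_d -> 'rV[R]_d)
  (Li : 'I_n -> R) (L : R) (zstar : 'rV[R]_d) (g1 g2 : R) :
  (2 <= n)%N ->
  (forall i, 0 <= Li i) -> (forall i, lipschitz (F i) (Li i)) ->
  0 <= L -> lipschitz (fun z => n%:R^-1 *: \sum_(i < n) F i z) L ->
  n%:R^-1 *: \sum_(i < n) F i zstar = 0 ->
  0 < g1 -> 0 < g2 ->
  let Lmax := \big[Num.max/0]_(i < n) Li i in
  let A := 2 / n%:R * \sum_(i < n) Li i ^+ 2 in
  let sigma2 := n%:R^-1 * \sum_(i < n) enorm (F i zstar) ^+ 2 in
  g1 * (3 * Num.sqrt (2 * n%:R * (n%:R - 1)) * Lmax) <= 1 ->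
  g2 * (Num.sqrt (n%:R * (n%:R - 1)) * Lmax) <= 1 ->
  forall z0 : 'rV[R]_d,
  E_perm (fun s : 'S_n =>
      n%:R^-1 * \sum_(j < n) enorm (seg_rr F g1 g2 s z0 j - z0) ^+ 2)
  <= (10 * n%:R ^+ 2 * L ^+ 2 + A * (25 + n%:R)) * g1 ^+ 2 * enorm (z0 - zstar) ^+ 2
     + 2 * (n%:R + 25) * g1 ^+ 2 * sigma2.
Proof.
move=> n2 Li0 hLi L0 hL hstar g10 g20 Lmax A sigma2 hg1 hg2 z0.
set N : R := n%:R.
have N2 : 2 <= N by rewrite /N (ler_nat R 2 n).
have n1 : (1 <= n)%N by exact: ltnW.
have Lmax0 : 0 <= Lmax by exact: bigmax_ge_id.
have hLm i : Li i <= Lmax by exact: le_bigmax.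
have lipF i x y : nsq (F i x - F i y) <= Lmax ^+ 2 * nsq (x - y).
  apply: (le_trans (lip_sq (Li0 i) (hLi i) x y)); apply: ler_wpM2r; first exact: nsq_ge0.
  have := Li0 i; have := hLm i; nra.
set c1 := g1 ^+ 2 * Lmax ^+ 2.
set c2 := g2 ^+ 2 * Lmax ^+ 2.
have K0 : 2 <= N * (N - 1) by nra.
have hc1 : 18 * c1 * (N * (N - 1)) <= 1.
  have q0 : 0 <= 2 * N * (N - 1) by nra.
  have q2 := sqr_sqrtr q0.
  have q1 : 0 <= Num.sqrt (2 * N * (N - 1)) := sqrtr_ge0 _.
  set q := Num.sqrt _ in q1 q2 hg1.
  have X0 : 0 <= g1 * (3 * q * Lmax) by apply: mulr_ge0; [lra | nra].
  have : (g1 * (3 * q * Lmax)) ^+ 2 <= 1 by nra.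
  have e : (g1 * (3 * q * Lmax)) ^+ 2 = 9 * (q ^+ 2) * c1 by rewrite /c1; ring.
  rewrite e q2; lra.
have hc2 : c2 * (N * (N - 1)) <= 1.
  have q0 : 0 <= N * (N - 1) by nra.
  have q2 := sqr_sqrtr q0.
  have q1 : 0 <= Num.sqrt (N * (N - 1)) := sqrtr_ge0 _.
  set q := Num.sqrt _ in q1 q2 hg2.
  have X0 : 0 <= g2 * (q * Lmax) by apply: mulr_ge0; [lra | nra].
  have : (g2 * (q * Lmax)) ^+ 2 <= 1 by nra.
  have e : (g2 * (q * Lmax)) ^+ 2 = (q ^+ 2) * c2 by rewrite /c2; ring.
  rewrite e q2; lra.
have c10 : 0 <= c1 by rewrite /c1; apply: mulr_ge0; exact: sqr_ge0.
have c20 : 0 <= c2 by rewrite /c2; apply: mulr_ge0; exact: sqr_ge0.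
have c2h : c2 <= 1 / 2 by nra.
set Sv := \sum_i nsq (F i z0).
set Ss := nsq (\sum_i F i z0).
set G := g1 ^+ 2.
have G0 : 0 <= G := sqr_ge0 g1.
have Sv0 : 0 <= Sv by apply: sumr_ge0 => i _; exact: nsq_ge0.
set T := fun s : 'S_n => \sum_(j < n) nsq (\sum_(t < j) op_at F s t z0).
set Wf := fun s : 'S_n => \sum_(j < n) nsq (seg_rr F g1 g2 s z0 j - z0).
have hW s : Wf s <= 9 / 5 * (8 * G * Sv + 2 * G * T s).
  have hb : \sum_(t < n) nsq (op_at F s t z0) = Sv.
    rewrite /Sv [RHS](reindex_inj (@perm_inj _ s)) /=; apply: eq_bigr => t _.
    by rewrite (op_atE _ _ (ltn_ord t)); congr (nsq (F (s _) z0)); apply: val_inj.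
  pose a := fun t => op_at F s t (seg_rr F g1 g2 s z0 t - g2 *: op_at F s t (seg_rr F g1 g2 s z0 t)).
  pose b := fun t => op_at F s t z0.
  have hab : forall t, (t < n)%N -> nsq (a t - b t) <=
      4 * Lmax ^+ 2 * nsq (- g1 *: \sum_(u < t) a u) + 4 * c2 * nsq (b t).
    move=> t ht; rewrite /a /b -seg_diff !(op_atE _ _ ht).
    by apply: step_bound; [exact: sqr_ge0 | exact: lipF | exact: c2h].
  have hW := @W_bound R d n (- g1) (Lmax ^+ 2) c2 a b Sv (sqr_ge0 _) c20 n1 hab hb.
  have eW : Wf s = \sum_(j < n) nsq (- g1 *: \sum_(t < j) a t).
    by apply: eq_bigr => j _; rewrite seg_diff.
  rewrite -eW sqrrN -/G in hW.
  have W0 : 0 <= Wf s by apply: sumr_ge0 => j _; exact: nsq_ge0.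
  have e1 : 8 * (G * Lmax ^+ 2) * (N * (N - 1)) * Wf s <= 4 / 9 * Wf s.
    have : 8 * (G * Lmax ^+ 2) * (N * (N - 1)) <= 4 / 9 by rewrite /c1 -/G in hc1; lra.
    move=> h; have := ler_wpM2r W0 h; by [].
  have e2 : 8 * G * c2 * (N * (N - 1)) * Sv <= 8 * G * Sv.
    have h : G * c2 * (N * (N - 1)) <= G * 1.
      by rewrite -mulrA; apply: ler_wpM2l.
    have := ler_wpM2r Sv0 h; rewrite mulr1 => h'; nra.
  rewrite /T; lra.
have N0 : N != 0 by apply: lt0r_neq0; lra.
have eL : E_perm (fun s : 'S_n => N^-1 * \sum_(j < n) enorm (seg_rr F g1 g2 s z0 j - z0) ^+ 2)
    = N^-1 * E_perm Wf.
  rewrite -E_perm_scale; apply: E_perm_ext => s; rewrite /Wf; congr (_ * _).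
  by apply: eq_bigr => j _; rewrite enorm_sq.
rewrite eL.
have hEW : E_perm Wf <= 9 / 5 * (8 * G * Sv + 2 * G * E_perm T).
  apply: le_trans (E_perm_le hW) _.
  rewrite (E_perm_scale (9 / 5) (fun s => 8 * G * Sv + 2 * G * T s)).
  rewrite (E_perm_add (fun _ => 8 * G * Sv) (fun s => 2 * G * T s)).
  by rewrite E_perm_const (E_perm_scale (2 * G) T).
have hET : E_perm T * (N * (N - 1)) <= N * (Ss * (N * (N - 1)) + N ^+ 2 * Sv / 4).
  rewrite /T E_perm_sum mulr_suml.
  apply: le_trans (ler_sum _ (fun (j : 'I_n) _ => E_j F z0 (ltnW (ltn_ord j)) n2)) _.
  by rewrite sumr_const card_ord -[(_ + _) *+ n]mulr_natl.
set r := enorm (z0 - zstar) ^+ 2.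
have r0 : 0 <= r by exact: sqr_ge0.
have er : r = nsq (z0 - zstar) by rewrite /r enorm_sq.
set P := \sum_(i < n) Li i ^+ 2.
have P0 : 0 <= P by apply: sumr_ge0 => i _; exact: sqr_ge0.
set Q := \sum_(i < n) enorm (F i zstar) ^+ 2.
have Q0 : 0 <= Q by apply: sumr_ge0 => i _; exact: sqr_ge0.
have hSv : Sv <= N * (A * r + 2 * sigma2).
  have -> : N * (A * r + 2 * sigma2) = 2 * P * r + 2 * Q.
    by rewrite /A /sigma2 -/N -/P -/Q; field.
  have -> : 2 * P * r + 2 * Q = \sum_i (2 * (Li i ^+ 2 * r) + 2 * (enorm (F i zstar) ^+ 2)).
    by rewrite big_split /= -!mulr_sumr -mulr_suml mulrA.
  apply: ler_sum => i _.
  rewrite enorm_sq er.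
  have h1 : nsq (F i z0) <= 2 * nsq (F i z0 - F i zstar) + 2 * nsq (F i zstar).
    by rewrite -{1}(subrK (F i zstar) (F i z0)); exact: nsq_add2.
  have h2 := lip_sq (Li0 i) (hLi i) z0 zstar.
  lra.
have hSs : Ss <= N ^+ 2 * (L ^+ 2 * r).
  have -> : Ss = N ^+ 2 * nsq (N^-1 *: \sum_i F i z0).
    by rewrite nsqZ mulrA -exprMn mulfV // expr1n mul1r.
  apply: ler_wpM2l; first exact: sqr_ge0.
  have h := lip_sq L0 hL z0 zstar; rewrite /= hstar subr0 -er in h.
  exact: h.
have A0 : 0 <= A by rewrite /A; apply: mulr_ge0 => //; apply: divr_ge0 => //; lra.
have s0 : 0 <= sigma2 by rewrite /sigma2; apply: mulr_ge0 => //; rewrite invr_ge0; lra.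
apply: (final_arith N2 G0 Sv0 (nsq_ge0 _) A0 r0 s0 (sqr_ge0 L) hEW hET hSv hSs).
Qed.
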